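(* Let $\{x,\xi\}$ be a line congruence, where $x:U\to\mathbb{R}^3$ is smooth, $U\subset\mathbb{R}^2$ open, and $\xi:U\to S^2$ is a proper frontal. Let $\Omega=(w_1\ w_2)$ be a tangent moving basis of $\xi$ and write $D\xi=\Omega\Delta_\Omega^T$ with $\Delta_\Omega=(\delta_{ij})$. \begin{enumerate} \item A curve $(u_1(t),u_2(t))$ in $U$ is a Kummer principal line if and only if it is a solution of \[ C_1 b_1^2 + C_2 b_1 b_2 + C_3 b_2^2 = 0 \quad\text{for all } t, \] where $\begin{pmatrix} b_1\\ b_2\end{pmatrix}=\Delta_\Omega^T\begin{pmatrix} u_1'\\ u_2'\end{pmatrix}$ and \begin{align*} C_1 &= 2\mathscr{F}_\Omega(\delta_{22}\mathscr{L}_\Omega-\delta_{12}\mathscr{M}_{1\Omega}) - \mathscr{E}_\Omega(\delta_{11}\mathscr{M}_{1\Omega}-\delta_{21}\mathscr{L}_\Omega+\delta_{22}\mathscr{M}_{2\Omega}-\delta_{12}\mathscr{N}_\Omega),\\ C_2 &= 2\mathscr{G}_\Omega(\delta_{22}\mathscr{L}_\Omega-\delta_{12}\mathscr{M}_{1\Omega}) - 2\mathscr{E}_\Omega(\delta_{11}\mathscr{N}_\Omega-\delta_{21}\mathscr{M}_{2\Omega}),\\ C_3 &= \mathscr{G}_\Omega(\delta_{11}\mathscr{M}_{1\Omega}-\delta_{21}\mathscr{L}_\Omega+\delta_{22}\mathscr{M}_{2\Omega}-\delta_{12}\mathscr{N}_\Omega) - 2\mathscr{F}_\Omega(\delta_{11}\mathscr{N}_\Omega-\delta_{21}\mathscr{M}_{2\Omega}).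 \end{align*} This equation is called the equation of principal surfaces of the congruence. \item If the congruence is normal, then the equation of principal surfaces can be written as \[ \begin{pmatrix} u_1' & u_2'\end{pmatrix}\Delta_\Omega\,\mathbf{P}\,\mathrm{adj}(\bm{\mathcal{II}}_\Omega)^T\Delta_\Omega\bm{\mathcal{I}}_\Omega\Delta_\Omega^T\begin{pmatrix} u_1'\\ u_2'\end{pmatrix}=0,\qquad \mathbf{P}=\begin{pmatrix}0&1\\-1&0\end{pmatrix}. \] \end{enumerate}
   Context: A frontal is a smooth map $\xi:U\to\mathbb{R}^3$ admitting locally a unit normal vector field; it is proper if its singular set $\Sigma(\xi)$ has empty interior. A tangent moving basis of $\xi$ is a smooth map $\Omega=(w_1\ w_2):U\to M_{3\times2}(\mathbb{R})$ with linearly independent columns such that $\xi_{u_1},\xi_{u_2}\in\mathrm{span}(w_1,w_2)=P_\Omega$; then $D\xi=\Omega\Delta_\Omega^T$ for a unique $\Delta_\Omega:U\to M_{2\times2}(\mathbb{R})$. The $\Omega$-Kummer fundamental forms have coefficients $\mathscr{E}_\Omega=\langle w_1,w_1\rangle$, $\mathscr{F}_\Omega=\langle w_1,w_2\rangle$, $\mathscr{G}_\Omega=\langle w_2,w_2\rangle$ (matrix $\bm{\mathcal{I}}_\Omega=\Omega^T\Omega$), and $\mathscr{L}_\Omega=-\langle x_{u_1},w_1\rangle$, $\mathscr{M}_{2\Omega}=-\langle x_{u_1},w_2\rangle$, $\mathscr{M}_{1\Omega}=-\langle x_{u_2},w_1\rangle$, $\mathscr{N}_\Omega=-\langle x_{u_2},w_2\rangle$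 (matrix $\bm{\mathcal{II}}_\Omega=-\Omega^TDx$). For $q\in U$ define $\mathscr{K}_q^\Omega(b_1,b_2)=\dfrac{b^T\bm{\mathcal{II}}_\Omega\,\mathrm{adj}(\Delta_\Omega^T)b}{b^T\bm{\mathcal{I}}_\Omega b}$, $b=(b_1,b_2)^T$, $\mathrm{adj}$ the adjugate matrix. A direction $b_1w_1+b_2w_2\in P_\Omega$ is a Kummer principal direction if $\mathscr{K}_q^\Omega(b_1,b_2)$ is an extreme value of $\mathscr{K}_q^\Omega$. For a smooth curve $\alpha(t)=(u_1(t),u_2(t))$ in $U$, the ruled surface $Y(t,v)=x(\alpha(t))+v\xi(\alpha(t))$ is a principal surface if for every $t$ with $(b_1,b_2)^T=\Delta_\Omega^T(u_1',u_2')^T\neq 0$, $(b_1,b_2)$ determines a Kummer principal direction; $\alpha$ (or the directrix curve) is then called a Kummer principal line. The congruence is normal if there is a surface whose normal lines are parallel to the lines of the congruence; equivalently, $\bm{\mathcal{II}}_\Omega\,\mathrm{adj}(\Delta_\Omega^T)$ is symmetric. *)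

(* Defs.v *)
From HB Require Import structures.
From mathcomp Require Import all_boot all_order all_algebra.
From mathcomp Require Import all_classical all_reals all_analysis.
Set Implicit Arguments. Unset Strict Implicit. Unset Printing Implicit Defensive.
Import Order.TTheory GRing.Theory Num.Theory.
Import numFieldNormedType.Exports.
Local Open Scope classical_set_scope.
Local Open Scope ring_scope.

Section KummerDefs.
Variable R : realType.

Definition evec (i : 'I_2) : 'rV[R]_2 := delta_mx 0 i.

(* partial derivative with respect to u_{i+1} *)
Definition partial {V : normedModType R} (i : 'I_2) (f : 'rV[R]_2 -> V)
  : 'rV[R]_2 -> V := fun p => derive f p (evec i).

Definition iter_partial {V : normedModType R} (s : seq 'I_2) (f : 'rV[R]_2 -> V)
  : 'rV[R]_2 -> V := foldr (@partial V) f s.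

Definition smooth_on {V : normedModType R} (U : set 'rV[R]_2) (f : 'rV[R]_2 -> V)
  : Prop :=
  forall (s : seq 'I_2) (p : 'rV[R]_2), U p ->
    {for p, continuous (iter_partial s f)} /\
    forall i, derivable (iter_partial s f) p (evec i).

Definition smooth_curve_on {V : normedModType R} (I : set R) (a : R -> V) : Prop :=
  forall (k : nat) (t : R), I t ->
    {for t, continuous (iter k (@derive1 R V) a)} /\
    derivable (iter k (@derive1 R V) a) t 1.

Definition jac (f : 'rV[R]_2 -> 'cV[R]_3) (p : 'rV[R]_2) : 'M[R]_(3, 2) :=
  \matrix_(k < 3, j < 2) partial j f p k 0.

Definition dot (u v : 'cV[R]_3) : R := (u^T *m v) 0 0.

Definition singular_set (U : set 'rV[R]_2) (xi : 'rV[R]_2 -> 'cV[R]_3) :=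
  [set p | U p /\ (\rank (jac xi p) < 2)%N].

Definition frontal (U : set 'rV[R]_2) (xi : 'rV[R]_2 -> 'cV[R]_3) : Prop :=
  smooth_on U xi /\
  forall p, U p -> exists V : set 'rV[R]_2, [/\ open V, V p, V `<=` U &
    exists nu : 'rV[R]_2 -> 'cV[R]_3, smooth_on V nu /\
      forall q, V q -> dot (nu q) (nu q) = 1 /\
        forall i, dot (nu q) (partial i xi q) = 0].

Definition proper_frontal (U : set 'rV[R]_2) (xi : 'rV[R]_2 -> 'cV[R]_3) : Prop :=
  frontal U xi /\ interior (singular_set U xi) = set0.

Definition tangent_moving_basis (U : set 'rV[R]_2) (xi : 'rV[R]_2 -> 'cV[R]_3)
  (Om : 'rV[R]_2 -> 'M[R]_(3, 2)) : Prop :=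
  smooth_on U Om /\
  forall p, U p -> \rank (Om p) = 2%N /\
    forall i : 'I_2, ((col i (jac xi p))^T <= (Om p)^T)%MS.

Definition w1 (Om : 'rV[R]_2 -> 'M[R]_(3, 2)) p : 'cV[R]_3 := col 0 (Om p).
Definition w2 (Om : 'rV[R]_2 -> 'M[R]_(3, 2)) p : 'cV[R]_3 := col 1 (Om p).

Definition KE Om p := dot (w1 Om p) (w1 Om p).
Definition KF Om p := dot (w1 Om p) (w2 Om p).
Definition KG Om p := dot (w2 Om p) (w2 Om p).
Definition KL Om (x : 'rV[R]_2 -> 'cV[R]_3) p := - dot (partial 0 x p) (w1 Om p).
Definition KM2 Om (x : 'rV[R]_2 -> 'cV[R]_3) p := - dot (partial 0 x p) (w2 Om p).
Definition KM1 Om (x : 'rV[R]_2 -> 'cV[R]_3) p := - dot (partial 1 x p) (w1 Om p).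
Definition KN Om (x : 'rV[R]_2 -> 'cV[R]_3) p := - dot (partial 1 x p) (w2 Om p).

Definition Iform (Om : 'rV[R]_2 -> 'M[R]_(3, 2)) p : 'M[R]_2 := (Om p)^T *m Om p.
Definition IIform (Om : 'rV[R]_2 -> 'M[R]_(3, 2)) (x : 'rV[R]_2 -> 'cV[R]_3) p
  : 'M[R]_2 := - ((Om p)^T *m jac x p).

Definition Kq Om x (Dl : 'rV[R]_2 -> 'M[R]_2) p (b : 'cV[R]_2) : R :=
  (b^T *m IIform Om x p *m \adj ((Dl p)^T) *m b) 0 0 / (b^T *m Iform Om p *m b) 0 0.

(* b1 w1 + b2 w2 is a Kummer principal direction at p: Kq(b) is an extreme
   value of Kq (on nonzero b) *)
Definition kummer_principal_direction Om x Dl p (b : 'cV[R]_2) : Prop :=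
  b != 0 /\
  ((forall c : 'cV[R]_2, c != 0 -> Kq Om x Dl p c <= Kq Om x Dl p b) \/
   (forall c : 'cV[R]_2, c != 0 -> Kq Om x Dl p b <= Kq Om x Dl p c)).

Definition bvec (Dl : 'rV[R]_2 -> 'M[R]_2) (a : R -> 'rV[R]_2) (t : R) : 'cV[R]_2 :=
  (Dl (a t))^T *m (derive1 a t)^T.

(* Y(t,v) = x(a t) + v xi(a t) is a principal surface, i.e. a is a Kummer
   principal line *)
Definition kummer_principal_line (I : set R) Om x Dl (a : R -> 'rV[R]_2) : Prop :=
  forall t, I t -> bvec Dl a t != 0 ->
    kummer_principal_direction Om x Dl (a t) (bvec Dl a t).

Definition C1 Om x (Dl : 'rV[R]_2 -> 'M[R]_2) p : R :=
  let d := Dl p in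
  2 * KF Om p * (d 1 1 * KL Om x p - d 0 1 * KM1 Om x p)
  - KE Om p * (d 0 0 * KM1 Om x p - d 1 0 * KL Om x p
               + d 1 1 * KM2 Om x p - d 0 1 * KN Om x p).
Definition C2 Om x (Dl : 'rV[R]_2 -> 'M[R]_2) p : R :=
  let d := Dl p in
  2 * KG Om p * (d 1 1 * KL Om x p - d 0 1 * KM1 Om x p)
  - 2 * KE Om p * (d 0 0 * KN Om x p - d 1 0 * KM2 Om x p).
Definition C3 Om x (Dl : 'rV[R]_2 -> 'M[R]_2) p : R :=
  let d := Dl p in
  KG Om p * (d 0 0 * KM1 Om x p - d 1 0 * KL Om x p
             + d 1 1 * KM2 Om x p - d 0 1 * KN Om x p)
  - 2 * KF Om p * (d 0 0 * KN Om x p - d 1 0 * KM2 Om x p).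

Definition principal_eq Om x Dl (a : R -> 'rV[R]_2) t : R :=
  let b := bvec Dl a t in
  C1 Om x Dl (a t) * b 0 0 ^+ 2 + C2 Om x Dl (a t) * b 0 0 * b 1 0
  + C3 Om x Dl (a t) * b 1 0 ^+ 2.

Definition normal_congruence (U : set 'rV[R]_2) Om x (Dl : 'rV[R]_2 -> 'M[R]_2) : Prop :=
  forall p, U p ->
    (IIform Om x p *m \adj ((Dl p)^T))^T = IIform Om x p *m \adj ((Dl p)^T).

Definition Pmx : 'M[R]_2 :=
  \matrix_(i < 2, j < 2)
    (if ((i : nat) == 0%N) && ((j : nat) == 1%N) then 1
     else if ((i : nat) == 1%N) && ((j : nat) == 0%N) then -1 else 0).

Definition principal_eq_normal Om x (Dl : 'rV[R]_2 -> 'M[R]_2) (a : R -> 'rV[R]_2) t : R :=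
  let p := a t in
  (derive1 a t *m Dl p *m Pmx *m (\adj (IIform Om x p))^T *m Dl p *m Iform Om p
     *m (Dl p)^T *m (derive1 a t)^T) 0 0.

End KummerDefs.

(* Main.v *)
Require Import Defs.
From HB Require Import structures.
From mathcomp Require Import all_boot all_order all_algebra.
From mathcomp Require Import all_classical all_reals all_analysis.
From mathcomp Require Import ring lra.
Import Order.TTheory GRing.Theory Num.Theory.
Import numFieldNormedType.Exports.
Local Open Scope classical_set_scope.
Local Open Scope ring_scope.

Section S.
Variable R : comNzRingType.
Lemma sum2 (F : 'I_2 -> R) : \sum_(i < 2) F i = F 0 + F 1.
Proof. rewrite big_ord_recl big_ord_recl big_ord0 addr0; congr (_ + F _); exact: val_inj. Qed.
Lemma adj2 (A : 'M[R]_2) : \adj A = \matrix_(i,j) (if i == 0 then (if j == 0 then A 1 1 else - A 0 1) else (if j == 0 then - A 1 0 else A 0 0)).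
Proof.
apply/matrixP => i j; rewrite !mxE /cofactor det_mx11 !mxE.
case: i => [[|[|?]] ?] //; case: j => [[|[|?]] ?] //=;
  rewrite ?(addn0, add0n, expr0, expr1, mul1r, mulN1r, expr2, mulrNN, mul1r);
  rewrite ?opprK ?mul1r; (congr (- _) || idtac); apply: f_equal2; apply: val_inj. all: reflexivity.
Qed.


End S.

Section K.
Variable R : realFieldType.

Lemma quad0 (al be : R) : (forall s, 0 <= al * s + be * s ^+ 2) -> al = 0.
Proof.
move=> h.
pose k := `|be| + 1.
have kp : 0 < k by rewrite /k; have := normr_ge0 be; lra.
have hb : be <= `|be| := ler_norm be.
pose s := - al / k.
have hs : s * k = - al by rewrite /s mulrAC -mulrA divff ?mulr1 // gt_eqF.
have := h s.
have e : k ^+ 2 * (al * s + be * s ^+ 2) = al ^+ 2 * (be - k).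
  have -> : k ^+ 2 * (al * s + be * s ^+ 2) = al * k * (s * k) + be * (s * k) ^+ 2 by ring.
  rewrite hs; ring.
move=> h0.
have : 0 <= al ^+ 2 * (be - k) by rewrite -e; apply: mulr_ge0 => //; apply: sqr_ge0.
have : be - k <= -1 by rewrite /k; lra.
move=> h1 h2.
have : al ^+ 2 <= 0 by nra.
rewrite -[al ^+ 2]/(al * al); move=> h3.
apply/eqP; rewrite -sqrf_eq0; apply/eqP.
apply: le_anti; rewrite h3 /=; exact: sqr_ge0.
Qed.

Definition Qf (a S d x y : R) := a * x ^+ 2 + S * x * y + d * y ^+ 2.
Definition Pf (E F G x y : R) := E * x ^+ 2 + 2 * F * x * y + G * y ^+ 2.

Lemma grad0 (E F G a S d l b1 b2 : R) :
  l * Pf E F G b1 b2 = Qf a S d b1 b2 ->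
  (forall x y, Qf a S d x y <= l * Pf E F G x y) ->
  2 * a * b1 + S * b2 = l * (2 * E * b1 + 2 * F * b2) /\
  S * b1 + 2 * d * b2 = l * (2 * F * b1 + 2 * G * b2).
Proof.
move=> e h; split.
- have := @quad0 (l * (2 * E * b1 + 2 * F * b2) - (2 * a * b1 + S * b2)) (l * E - a).
  have H : forall s, 0 <= (l * (2 * E * b1 + 2 * F * b2) - (2 * a * b1 + S * b2)) * s + (l * E - a) * s ^+ 2.
    move=> s; have := h (b1 + s) b2; rewrite /Qf /Pf in e *.
    have -> : (l * (2 * E * b1 + 2 * F * b2) - (2 * a * b1 + S * b2)) * s + (l * E - a) * s ^+ 2
      = l * (E * (b1 + s) ^+ 2 + 2 * F * (b1 + s) * b2 + G * b2 ^+ 2) - (a * (b1 + s) ^+ 2 + S * (b1 + s) * b2 + d * b2 ^+ 2)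
        - (l * (E * b1 ^+ 2 + 2 * F * b1 * b2 + G * b2 ^+ 2) - (a * b1 ^+ 2 + S * b1 * b2 + d * b2 ^+ 2)) by ring.
    rewrite e subrr subr0 subr_ge0 //.
  by move=> /(_ H) /eqP; rewrite subr_eq0 => /eqP ->.
- have := @quad0 (l * (2 * F * b1 + 2 * G * b2) - (S * b1 + 2 * d * b2)) (l * G - d).
  have H : forall s, 0 <= (l * (2 * F * b1 + 2 * G * b2) - (S * b1 + 2 * d * b2)) * s + (l * G - d) * s ^+ 2.
    move=> s; have := h b1 (b2 + s); rewrite /Qf /Pf in e *.
    have -> : (l * (2 * F * b1 + 2 * G * b2) - (S * b1 + 2 * d * b2)) * s + (l * G - d) * s ^+ 2
      = l * (E * b1 ^+ 2 + 2 * F * b1 * (b2 + s) + G * (b2 + s) ^+ 2) - (a * b1 ^+ 2 + S * b1 * (b2 + s) + d * (b2 + s) ^+ 2)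
        - (l * (E * b1 ^+ 2 + 2 * F * b1 * b2 + G * b2 ^+ 2) - (a * b1 ^+ 2 + S * b1 * b2 + d * b2 ^+ 2)) by ring.
    rewrite e subrr subr0 subr_ge0 //.
  by move=> /(_ H) /eqP; rewrite subr_eq0 => /eqP ->.
Qed.

Definition crossf (E F G a S d b1 b2 : R) :=
  (2 * F * a - E * S) * b1 ^+ 2 + 2 * (G * a - E * d) * b1 * b2 + (S * G - 2 * d * F) * b2 ^+ 2.

Lemma key (E F G a S d b1 b2 : R) :
  (forall x y, (x != 0) || (y != 0) -> 0 < Pf E F G x y) ->
  (b1 != 0) || (b2 != 0) ->
  ((forall x y, (x != 0) || (y != 0) -> Qf a S d x y / Pf E F G x y <= Qf a S d b1 b2 / Pf E F G b1 b2) \/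
   (forall x y, (x != 0) || (y != 0) -> Qf a S d b1 b2 / Pf E F G b1 b2 <= Qf a S d x y / Pf E F G x y))
  <-> crossf E F G a S d b1 b2 = 0.
Proof.
move=> hP hb.
have Pb := hP _ _ hb.
set l := Qf a S d b1 b2 / Pf E F G b1 b2.
have el : l * Pf E F G b1 b2 = Qf a S d b1 b2 by rewrite /l mulfVK // gt_eqF.
have Q00 : forall x y, ~~ ((x != 0) || (y != 0)) -> Qf a S d x y = 0 /\ Pf E F G x y = 0.
  by move=> x y; rewrite negb_or !negbK => /andP[/eqP -> /eqP ->]; rewrite /Qf /Pf; split; ring.
have crossE : 2 * a * b1 + S * b2 = l * (2 * E * b1 + 2 * F * b2) ->
   S * b1 + 2 * d * b2 = l * (2 * F * b1 + 2 * G * b2) -> crossf E F G a S d b1 b2 = 0.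
  move=> h1 h2.
  have -> : crossf E F G a S d b1 b2 = ((2 * a * b1 + S * b2) * (2 * F * b1 + 2 * G * b2)
      - (S * b1 + 2 * d * b2) * (2 * E * b1 + 2 * F * b2)) / 2.
    by rewrite /crossf; field.
  by rewrite h1 h2; field.
split.
- case=> h.
  + have hle : forall x y, Qf a S d x y <= l * Pf E F G x y.
      move=> x y; case hxy: ((x != 0) || (y != 0)).
        by have := h x y hxy; rewrite ler_pdivrMr ?hP.
      by have [-> ->] := Q00 x y (negbT hxy); rewrite mulr0.
    have [h1 h2] := @grad0 E F G a S d l b1 b2 el hle.
    exact: crossE.
  + have el' : l * Pf (-E) (-F) (-G) b1 b2 = Qf (-a) (-S) (-d) b1 b2.
      have -> : l * Pf (-E) (-F) (-G) b1 b2 = - (l * Pf E F G b1 b2) by rewrite /Pf; ring.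
      by rewrite el /Qf; ring.
    have hle : forall x y, Qf (-a) (-S) (-d) x y <= l * Pf (-E) (-F) (-G) x y.
      rewrite /Qf /Pf; move=> x y; case hxy: ((x != 0) || (y != 0)).
        have := h x y hxy; rewrite ler_pdivlMr ?hP // /Pf /Qf => hh.
        have -> : (- a * x ^+ 2 + - S * x * y + - d * y ^+ 2) = - Qf a S d x y by rewrite /Qf; ring.
        have -> : l * (- E * x ^+ 2 + 2 * - F * x * y + - G * y ^+ 2) = - (l * Pf E F G x y) by rewrite /Pf; ring.
        by rewrite lerN2.
      have [q p] := Q00 x y (negbT hxy); move: q p; rewrite /Qf /Pf => q p.
      have -> : (- a * x ^+ 2 + - S * x * y + - d * y ^+ 2) = - (a * x ^+ 2 + S * x * y + d * y ^+ 2) by ring.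
      have -> : l * (- E * x ^+ 2 + 2 * - F * x * y + - G * y ^+ 2) = - (l * (E * x ^+ 2 + 2 * F * x * y + G * y ^+ 2)) by ring.
      by rewrite q p mulr0 oppr0.
    have [h1 h2] := @grad0 (-E) (-F) (-G) (-a) (-S) (-d) l b1 b2 el' hle.
    apply: crossE.
      have -> : 2 * a * b1 + S * b2 = - (2 * - a * b1 + - S * b2) by ring.
      by rewrite h1; ring.
    have -> : S * b1 + 2 * d * b2 = - (- S * b1 + 2 * - d * b2) by ring.
    by rewrite h2; ring.
- move=> hc.
  pose m00 := a - l * E. pose m01 := S / 2 - l * F. pose m11 := d - l * G.
  pose u1 := m00 * b1 + m01 * b2. pose u2 := m01 * b1 + m11 * b2.
  pose v1 := E * b1 + F * b2. pose v2 := F * b1 + G * b2.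
  have hbu : b1 * u1 + b2 * u2 = 0.
    have -> : b1 * u1 + b2 * u2 = Qf a S d b1 b2 - l * Pf E F G b1 b2 by rewrite /u1 /u2 /m00 /m01 /m11 /Qf /Pf; field.
    by rewrite el subrr.
  have hPb : Pf E F G b1 b2 = b1 * v1 + b2 * v2 by rewrite /Pf /v1 /v2; ring.
  have hcr : u1 * v2 = u2 * v1.
    apply/eqP; rewrite -subr_eq0; apply/eqP.
    have <- : crossf E F G a S d b1 b2 / 2 = u1 * v2 - u2 * v1.
      by rewrite /crossf /u1 /u2 /v1 /v2 /m00 /m01 /m11; field.
    by rewrite hc mul0r.
  have hu1 : u1 = 0.
    have : u1 * Pf E F G b1 b2 = 0.
      rewrite hPb.
      have -> : u1 * (b1 * v1 + b2 * v2) = v1 * (b1 * u1) + b2 * (u1 * v2) by ring.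
      rewrite hcr.
      have -> : v1 * (b1 * u1) + b2 * (u2 * v1) = v1 * (b1 * u1 + b2 * u2) by ring.
      by rewrite hbu mulr0.
    by move/eqP; rewrite mulf_eq0 (gt_eqF Pb) orbF => /eqP.
  have hu2 : u2 = 0.
    have : u2 * Pf E F G b1 b2 = 0.
      rewrite hPb; have -> : u2 * (b1 * v1 + b2 * v2) = b1 * (u2 * v1) + v2 * (b2 * u2) by ring.
      rewrite -hcr hu1; have -> : b1 * (0 * v2) + v2 * (b2 * u2) = v2 * (b1 * 0 + b2 * u2) by ring.
      by rewrite -hu1 hbu mulr0.
    by move/eqP; rewrite mulf_eq0 (gt_eqF Pb) orbF => /eqP.
  have hdet : m00 * m11 - m01 ^+ 2 = 0.
    have e1 : b1 * (m00 * m11 - m01 ^+ 2) = 0.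
      have -> : b1 * (m00 * m11 - m01 ^+ 2) = m11 * u1 - m01 * u2 by rewrite /u1 /u2; ring.
      by rewrite hu1 hu2; ring.
    have e2 : b2 * (m00 * m11 - m01 ^+ 2) = 0.
      have -> : b2 * (m00 * m11 - m01 ^+ 2) = m00 * u2 - m01 * u1 by rewrite /u1 /u2; ring.
      by rewrite hu1 hu2; ring.
    case/orP: hb => hb.
      by move/eqP: e1; rewrite mulf_eq0 (negbTE hb) => /eqP.
    by move/eqP: e2; rewrite mulf_eq0 (negbTE hb) => /eqP.
  have form : forall x y, Qf a S d x y - l * Pf E F G x y = m00 * x ^+ 2 + 2 * m01 * x * y + m11 * y ^+ 2.
    by move=> x y; rewrite /Qf /Pf /m00 /m01 /m11; field.
  have sq : forall x y, (m00 + m11) * (Qf a S d x y - l * Pf E F G x y) = (m00 * x + m01 * y) ^+ 2 + (m01 * x + m11 * y) ^+ 2.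
    move=> x y; rewrite form.
    have -> : (m00 + m11) * (m00 * x ^+ 2 + 2 * m01 * x * y + m11 * y ^+ 2) = (m00 * x + m01 * y) ^+ 2 + (m01 * x + m11 * y) ^+ 2 + (m00 * m11 - m01 ^+ 2) * (x ^+ 2 + y ^+ 2) by ring.
    by rewrite hdet mul0r addr0.
  have sqp : forall x y, 0 <= (m00 + m11) * (Qf a S d x y - l * Pf E F G x y).
    by move=> x y; rewrite sq; apply: addr_ge0; apply: sqr_ge0.
  case: (ltrgtP 0 (m00 + m11)) => ht.
  + right => x y hxy; rewrite ler_pdivlMr ?hP // -subr_ge0.
    by have := sqp x y; rewrite pmulr_rge0.
  + left => x y hxy; rewrite ler_pdivrMr ?hP // -subr_ge0.
    have := sqp x y; rewrite nmulr_rge0 // => hh; rewrite -opprB oppr_ge0 //.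
  + have z11 : m11 = - m00 by apply/eqP; rewrite -subr_eq0 opprK addrC -ht.
    have z01 : m01 = 0.
      move: hdet; rewrite z11 => hd; apply/eqP; rewrite -sqrf_eq0; apply/eqP.
      apply: le_anti; rewrite sqr_ge0 andbT; have := sqr_ge0 m00; lra.
    have z00 : m00 = 0.
      move: hdet; rewrite z11 z01 => hd; apply/eqP; rewrite -sqrf_eq0; apply/eqP.
      apply: le_anti; rewrite sqr_ge0 andbT; lra.
    have z : forall x y, Qf a S d x y = l * Pf E F G x y.
      by move=> x y; apply/eqP; rewrite -subr_eq0 form z11 z00 z01 oppr0 !mul0r mulr0 !addr0 !mul0r add0r.
    left => x y hxy; rewrite z mulfK ?gt_eqF ?hP //.
Qed.
End K.
Lemma crossf00 (R : realFieldType) (E F G a S d : R) : @crossf R E F G a S d 0 0 = 0.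
Proof. by rewrite /crossf; ring. Qed.

Arguments Qf {R}. Arguments Pf {R}. Arguments crossf {R}. Arguments key {R}.
Section G.
Variable R : realType.

Lemma ord2P (i : 'I_2) : i = 0 \/ i = 1.
Proof. by case: i => [[|[|?]] ?]; [left|right|]; try apply: val_inj. Qed.

Lemma cV2_eq0 (c : 'cV[R]_2) : (c == 0) = (c 0 0 == 0) && (c 1 0 == 0).
Proof.
apply/eqP/andP => [-> | [/eqP h0 /eqP h1]]; first by rewrite !mxE.
apply/matrixP => i j; rewrite (ord1 j) !mxE; by case: (ord2P i) => ->.
Qed.

Lemma cV2_neq0 (c : 'cV[R]_2) : (c != 0) = (c 0 0 != 0) || (c 1 0 != 0).
Proof. by rewrite cV2_eq0 negb_and. Qed.

Lemma o10 : ((1 : 'I_2) == 0) = false. Proof. by []. Qed.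
Lemma lift00 : lift ord0 (ord0 : 'I_1) = 1 :> 'I_2. Proof. exact: val_inj. Qed.
Lemma mul22 m n (A : 'M[R]_(m, 2)) (B : 'M[R]_(2, n)) i j :
  (A *m B) i j = A i 0 * B 0 j + A i 1 * B 1 j.
Proof. by rewrite mxE sum2. Qed.
Definition mkc (x y : R) : 'cV[R]_2 := \col_i (if i == 0 then x else y).
Lemma mkc0 x y : mkc x y 0 0 = x. Proof. by rewrite !mxE. Qed.
Lemma mkc1 x y : mkc x y 1 0 = y. Proof. by rewrite !mxE. Qed.

Lemma eI (Om : 'rV[R]_2 -> 'M[R]_(3, 2)) p : Iform Om p =
  \matrix_(i, j) (if i == 0 then (if j == 0 then KE Om p else KF Om p)
                  else (if j == 0 then KF Om p else KG Om p)).
Proof.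
apply/matrixP => i j.
case: (ord2P i) => ->; case: (ord2P j) => ->; rewrite !mxE /= /KE /KF /KG /dot /w1 /w2 !mxE;
  apply: eq_bigr => k _; rewrite !mxE // mulrC //.
Qed.

Lemma eII (Om : 'rV[R]_2 -> 'M[R]_(3, 2)) x p : IIform Om x p =
  \matrix_(i, j) (if i == 0 then (if j == 0 then KL Om x p else KM1 Om x p)
                  else (if j == 0 then KM2 Om x p else KN Om x p)).
Proof.
apply/matrixP => i j.
case: (ord2P i) => ->; case: (ord2P j) => ->; rewrite !mxE /= /KL /KM1 /KM2 /KN /dot /w1 /w2 !mxE;
  congr (- _); apply: eq_bigr => k _; rewrite !mxE // mulrC //.
Qed.


Definition A00 Om (x : 'rV[R]_2 -> 'cV[R]_3) (Dl : 'rV[R]_2 -> 'M[R]_2) p :=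
  Dl p 1 1 * KL Om x p - Dl p 0 1 * KM1 Om x p.
Definition Sx Om (x : 'rV[R]_2 -> 'cV[R]_3) (Dl : 'rV[R]_2 -> 'M[R]_2) p :=
  Dl p 0 0 * KM1 Om x p - Dl p 1 0 * KL Om x p + Dl p 1 1 * KM2 Om x p - Dl p 0 1 * KN Om x p.
Definition A11 Om (x : 'rV[R]_2 -> 'cV[R]_3) (Dl : 'rV[R]_2 -> 'M[R]_2) p :=
  Dl p 0 0 * KN Om x p - Dl p 1 0 * KM2 Om x p.

Lemma Kq_E Om x Dl p c : Kq Om x Dl p c =
  Qf (A00 Om x Dl p) (Sx Om x Dl p) (A11 Om x Dl p) (c 0 0) (c 1 0) /
  Pf (KE Om p) (KF Om p) (KG Om p) (c 0 0) (c 1 0).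
Proof.
rewrite /Kq eI eII adj2.
rewrite !mul22 !mxE ?eqxx ?o10.
rewrite /Qf /Pf /A00 /Sx /A11.
move: (KL Om x p) (KM1 Om x p) (KM2 Om x p) (KN Om x p) (KE Om p) (KF Om p) (KG Om p) => L M1 M2 N E F G.
move: (Dl p 0 0) (Dl p 0 1) (Dl p 1 0) (Dl p 1 1) (c 0 0) (c 1 0) => d00 d01 d10 d11 c0 c1.
by congr (_ / _); ring.
Qed.

Lemma pe_E Om x Dl a t : principal_eq Om x Dl a t =
  crossf (KE Om (a t)) (KF Om (a t)) (KG Om (a t)) (A00 Om x Dl (a t)) (Sx Om x Dl (a t)) (A11 Om x Dl (a t))
    (bvec Dl a t 0 0) (bvec Dl a t 1 0).
Proof.
rewrite /principal_eq /crossf /C1 /C2 /C3 /A00 /Sx /A11 /=.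
move: (bvec Dl a t 0 0) (bvec Dl a t 1 0) => b0 b1.
move: (KL Om x (a t)) (KM1 Om x (a t)) (KM2 Om x (a t)) (KN Om x (a t)) (KE Om (a t)) (KF Om (a t)) (KG Om (a t)) => L M1 M2 N E F G.
move: (Dl (a t) 0 0) (Dl (a t) 0 1) (Dl (a t) 1 0) (Dl (a t) 1 1) => d00 d01 d10 d11.
by ring.
Qed.

Lemma Ipos Om p (c : 'cV[R]_2) : \rank (Om p) = 2%N -> c != 0 ->
  0 < Pf (KE Om p) (KF Om p) (KG Om p) (c 0 0) (c 1 0).
Proof.
move=> hr hc.
have -> : Pf (KE Om p) (KF Om p) (KG Om p) (c 0 0) (c 1 0) = (c^T *m Iform Om p *m c) 0 0.
  rewrite eI !mul22 !mxE ?eqxx ?o10 /Pf.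
  move: (KE Om p) (KF Om p) (KG Om p) (c 0 0) (c 1 0) => E F G c0 c1.
  by ring.
have -> : c^T *m Iform Om p *m c = (Om p *m c)^T *m (Om p *m c).
  by rewrite /Iform trmx_mul !mulmxA.
have hy : Om p *m c != 0.
  apply: contraNneq hc => h.
  have rf : row_free (Om p)^T by rewrite /row_free mxrank_tr hr.
  have : c^T *m (Om p)^T = 0 *m (Om p)^T by rewrite -trmx_mul h trmx0 mul0mx.
  by move/(row_free_inj rf) => e; rewrite -[c]trmxK e trmx0.
set y := Om p *m c in hy *.
have [k hk] : exists k, y k 0 != 0.
  apply/existsP; apply: contraNT hy; rewrite negb_exists => /forallP h.
  apply/eqP/matrixP => i j; rewrite (ord1 j) [RHS]mxE; by move: (h i); rewrite negbK => /eqP.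
rewrite mxE (bigD1 k) //= mxE.
have h1 : 0 < y k 0 * y k 0 by by rewrite -expr2 exprn_even_gt0 // hk orbT.
have h2 : 0 <= \sum_(i < 3 | i != k) y^T 0 i * y i 0.
  by apply: sumr_ge0 => i _; rewrite mxE -expr2 sqr_ge0.
by apply: (lt_le_trans h1); rewrite lerDl.
Qed.


Lemma n0 : nat_of_ord (0 : 'I_2) = 0%N. Proof. by []. Qed.
Lemma n1 : nat_of_ord (1 : 'I_2) = 1%N. Proof. by []. Qed.
Lemma e10 : (1 == 0)%N = false. Proof. by []. Qed.
Lemma e01 : (0 == 1)%N = false. Proof. by []. Qed.

Lemma pen_E (Om : 'rV[R]_2 -> 'M[R]_(3,2)) (x : 'rV[R]_2 -> 'cV[R]_3) (Dl : 'rV[R]_2 -> 'M[R]_2) (a : R -> 'rV[R]_2) (t : R) :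
  (IIform Om x (a t) *m \adj ((Dl (a t))^T))^T = IIform Om x (a t) *m \adj ((Dl (a t))^T) ->
  principal_eq Om x Dl a t = 2 * principal_eq_normal Om x Dl a t.
Proof.
move=> hs.
have h : (IIform Om x (a t) *m \adj ((Dl (a t))^T))^T 0 1 = (IIform Om x (a t) *m \adj ((Dl (a t))^T)) 0 1 by rewrite hs.
move: h; rewrite eII adj2 [(_^T) 0 1]mxE !mul22 !mxE ?eqxx ?o10.
rewrite /principal_eq /principal_eq_normal /C1 /C2 /C3 /bvec eI eII adj2 /Pmx !mul22 !mxE ?eqxx ?o10 ?n0 ?n1 ?e10 ?e01 /=.
move: (KL Om x (a t)) (KM1 Om x (a t)) (KM2 Om x (a t)) (KN Om x (a t)) (KE Om (a t)) (KF Om (a t)) (KG Om (a t)) => L M1 M2 N E F G.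
move: (Dl (a t) 0 0) (Dl (a t) 0 1) (Dl (a t) 1 0) (Dl (a t) 1 1) => d00 d01 d10 d11.
move: (derive1 a t 0 0) (derive1 a t 0 1) => v0 v1.
move=> h; apply/eqP; rewrite -subr_eq0; apply/eqP.
transitivity (- (M2 * d11 + N * - d01 - (L * - d10 + M1 * d00)) *
  (E * (d00 * v0 + d10 * v1) ^+ 2 + 2 * F * (d00 * v0 + d10 * v1) * (d01 * v0 + d11 * v1) + G * (d01 * v0 + d11 * v1) ^+ 2)).
  ring.
by rewrite h subrr oppr0 mul0r.
Qed.

Lemma pt (Om : 'rV[R]_2 -> 'M[R]_(3,2)) (x : 'rV[R]_2 -> 'cV[R]_3) (Dl : 'rV[R]_2 -> 'M[R]_2) (a : R -> 'rV[R]_2) (t : R) :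
  \rank (Om (a t)) = 2%N ->
  ((bvec Dl a t != 0 -> kummer_principal_direction Om x Dl (a t) (bvec Dl a t)) <->
   principal_eq Om x Dl a t = 0).
Proof.
move=> Up; rewrite pe_E.
move: (bvec Dl a t) => b.
have hP : forall x0 y0, (x0 != 0) || (y0 != 0) -> 0 < Pf (KE Om (a t)) (KF Om (a t)) (KG Om (a t)) x0 y0.
  move=> x0 y0 h; have := @Ipos Om (a t) (mkc x0 y0) Up; rewrite mkc0 mkc1; apply.
  by rewrite cV2_neq0 mkc0 mkc1.
case hb: (b == 0).
  split; last by move=> _ [].
  move=> _; move/eqP: hb => ->; rewrite !mxE; exact: crossf00.
have hb' : (b 0 0 != 0) || (b 1 0 != 0) by rewrite -cV2_neq0 hb.
have K := key (KE Om (a t)) (KF Om (a t)) (KG Om (a t)) (A00 Om x Dl (a t)) (Sx Om x Dl (a t)) (A11 Om x Dl (a t)) (b 0 0) (b 1 0) hP hb'.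
split.
- move=> h; have [_ hk] := h isT; apply/K.
  case: hk => hk; [left|right] => x0 y0 hxy; have := hk (mkc x0 y0); rewrite !Kq_E mkc0 mkc1; apply;
    by rewrite cV2_neq0 mkc0 mkc1.
- move=> hc _; split; first by rewrite hb.
  case/K: hc => hk; [left|right] => c hc'; rewrite !Kq_E; apply: hk; by rewrite -cV2_neq0.
Qed.
End G.

Theorem proposition4p4 (R : realType) (U : set 'rV[R]_2)
  (x xi : 'rV[R]_2 -> 'cV[R]_3) (Om : 'rV[R]_2 -> 'M[R]_(3, 2))
  (Dl : 'rV[R]_2 -> 'M[R]_2) :
  open U -> smooth_on U x ->
  (forall p, U p -> dot (xi p) (xi p) = 1) ->
  proper_frontal U xi ->
  tangent_moving_basis U xi Om ->
  (forall p, U p -> jac xi p = Om p *m (Dl p)^T) ->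
  forall (I : set R) (a : R -> 'rV[R]_2),
    open I -> smooth_curve_on I a -> (forall t, I t -> U (a t)) ->
    (kummer_principal_line I Om x Dl a <->
       (forall t, I t -> principal_eq Om x Dl a t = 0)) /\
    (normal_congruence U Om x Dl ->
       (kummer_principal_line I Om x Dl a <->
          (forall t, I t -> principal_eq_normal Om x Dl a t = 0))).
Proof.
move=> _ _ _ _ htmb _ I a _ _ haU.
have rk : forall t, I t -> \rank (Om (a t)) = 2%N.
  by move=> t It; have [_ h] := htmb; have [-> _] := h _ (haU t It).
have part1 : kummer_principal_line I Om x Dl a <->
       (forall t, I t -> principal_eq Om x Dl a t = 0).
  split=> h t It.
  - exact: (proj1 (@pt _ Om x Dl a t (rk t It)) (h t It)).
  - exact: (proj2 (@pt _ Om x Dl a t (rk t It)) (h t It)).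
split; first exact: part1.
move=> hn; rewrite part1; split=> h t It.
- have := @pen_E _ Om x Dl a t (hn _ (haU t It)); rewrite (h t It) => /esym /eqP.
  by rewrite mulf_eq0 pnatr_eq0 /= => /eqP.
- by rewrite (@pen_E _ Om x Dl a t (hn _ (haU t It))) (h t It) mulr0.
Qed.
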